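(* Let $\Gamma=(V,E)$ be a graph, $M_v$ ($v\in V$) monoids and $M=\Gamma_{v\in V}M_v$. Then each $M_v$ is a unitary submonoid of $M$: for $c\in M_v$ and $a\in M$, if $ac\in M_v$ then $a\in M_v$, and if $ca\in M_v$ then $a\in M_v$.
   Context: A graph $\Gamma=(V,E)$ has vertex set $V$ and irreflexive symmetric edge relation $E$. The graph product $\Gamma_{v\in V}M_v$ of pairwise disjoint monoids $M_v$ is the quotient of their free product by the congruence generated by all pairs $(mn,nm)$ with $m\in M_u$, $n\in M_v$, $(u,v)\in E$. The natural map from each $M_v$ into the graph product is injective, and $M_v$ is identified with its image. *)

(* Defs.v *)
(* Graph products of monoids, presented as words over the
   disjoint union of the vertex monoids modulo the congruence generated by
   the free-product relations and the graph commutation relations. *)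
From Stdlib Require Import List.
Import ListNotations.
Set Implicit Arguments.

Record monoid := Monoid {
  mcarrier :> Type;
  mop : mcarrier -> mcarrier -> mcarrier;
  mone : mcarrier;
  mopA : forall x y z, mop x (mop y z) = mop (mop x y) z;
  mop1l : forall x, mop mone x = x;
  mop1r : forall x, mop x mone = x
}.

Definition simple_graph (V : Type) (E : V -> V -> Prop) : Prop :=
  (forall u v, E u v -> E v u) /\ (forall v, ~ E v v).

Section GraphProduct.
Variables (V : Type) (E : V -> V -> Prop) (M : V -> monoid).

Definition letter := {v : V & mcarrier (M v)}.
Definition word := list letter.

Definition lt (v : V) (m : M v) : letter := existT (fun v => mcarrier (M v)) v m.

Inductive gp_equiv : word -> word -> Prop :=
| gp_refl : forall w, gp_equiv w w
| gp_sym : forall w1 w2, gp_equiv w1 w2 -> gp_equiv w2 w1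
| gp_trans : forall w1 w2 w3, gp_equiv w1 w2 -> gp_equiv w2 w3 -> gp_equiv w1 w3
| gp_cat : forall w1 w1' w2 w2', gp_equiv w1 w1' -> gp_equiv w2 w2' ->
    gp_equiv (w1 ++ w2) (w1' ++ w2')
| gp_unit : forall v, gp_equiv [lt v (mone (M v))] []
| gp_mul : forall v (m n : M v), gp_equiv [lt v m; lt v n] [lt v (mop (M v) m n)]
| gp_comm : forall u v (m : M u) (n : M v), E u v ->
    gp_equiv [lt u m; lt v n] [lt v n; lt u m].

Definition in_vertex (v : V) (w : word) : Prop :=
  exists m : M v, gp_equiv w [lt v m].

End GraphProduct.

(* Main.v *)
Require Import Defs.
From Stdlib Require Import List ClassicalEpsilon Eqdep Arith Lia.
Import ListNotations.

Definition dec (P : Prop) : {P} + {~ P} := excluded_middle_informative P.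

Fixpoint ins {V : Type} (E : V -> V -> Prop) (M : V -> monoid) (u : V) (y : M u)
  (x : word M) : word M :=
  match x with
  | [] => [lt M u y]
  | s :: x' =>
    match s with existT _ w z =>
      match dec (w = u) with
      | left e =>
        if dec (mop (M u) (eq_rect w (fun t => mcarrier (M t)) z u e) y = mone (M u))
        then x' else lt M u (mop (M u) (eq_rect w (fun t => mcarrier (M t)) z u e) y) :: x'
      | right _ => if dec (E w u) then s :: ins E M u y x' else lt M u y :: s :: x'
      end
    end
  end.

Definition act {V : Type} (E : V -> V -> Prop) (M : V -> monoid) (u : V) (y : M u)
  (x : word M) : word M :=
  if dec (y = mone (M u)) then x else ins E M u y x.

Inductive sh {V : Type} (E : V -> V -> Prop) (M : V -> monoid) : word M -> word M -> Prop :=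
| sh_refl : forall x, sh E M x x
| sh_sym : forall x y, sh E M x y -> sh E M y x
| sh_trans : forall x y z, sh E M x y -> sh E M y z -> sh E M x z
| sh_cons : forall s x y, sh E M x y -> sh E M (s :: x) (s :: y)
| sh_swap : forall s t x, E (projT1 s) (projT1 t) -> sh E M (s :: t :: x) (t :: s :: x).

Fixpoint noacc {V : Type} (E : V -> V -> Prop) (M : V -> monoid) (u : V) (x : word M) : Prop :=
  match x with
  | [] => True
  | s :: x' => projT1 s <> u /\ (E (projT1 s) u -> noacc E M u x')
  end.

Fixpoint red {V : Type} (E : V -> V -> Prop) (M : V -> monoid) (x : word M) : Prop :=
  match x with
  | [] => True
  | s :: x' => projT2 s <> mone (M (projT1 s)) /\ noacc E M (projT1 s) x' /\ red E M x'
  end.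

Section S.
Variables (V : Type) (E : V -> V -> Prop) (M : V -> monoid).
Hypothesis HE : simple_graph E.

Lemma ins_cons_eq u y z x :
  ins E M u y (lt M u z :: x) =
  if dec (mop (M u) z y = mone (M u)) then x else lt M u (mop (M u) z y) :: x.
Proof.
  unfold lt at 1; cbn. destruct (dec (u = u)) as [e|n].
  - rewrite (UIP_refl _ _ e). reflexivity.
  - congruence.
Qed.

Lemma ins_pass u y w z x : w <> u -> E w u ->
  ins E M u y (@cons (letter M) (existT _ w z) x) = @cons (letter M) (existT _ w z) (ins E M u y x).
Proof.
  intros n h. cbn. destruct (dec (w = u)); [congruence|].
  destruct (dec (E w u)); [reflexivity|contradiction].
Qed.

Lemma ins_block u y w z x : w <> u -> ~ E w u ->
  ins E M u y (@cons (letter M) (existT _ w z) x) = lt M u y :: @cons (letter M) (existT _ w z) x.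
Proof.
  intros n h. cbn. destruct (dec (w = u)); [congruence|].
  destruct (dec (E w u)); [contradiction|reflexivity].
Qed.


Lemma Esym u w : E u w -> E w u. Proof. apply (proj1 HE). Qed.
Lemma Eneq u w : E u w -> u <> w. Proof. intros h e; subst; apply (proj2 HE w h). Qed.

Lemma ins_sh u y x x' : sh E M x x' -> sh E M (ins E M u y x) (ins E M u y x').
Proof.
  induction 1.
  - apply sh_refl.
  - now apply sh_sym.
  - eapply sh_trans; eauto.
  - destruct s as [w z]. destruct (dec (w = u)) as [e|n].
    + subst w. fold (lt M u z). rewrite !ins_cons_eq.
      destruct (dec _); [assumption| now apply sh_cons].
    + destruct (dec (E w u)) as [h|h].
      * rewrite !ins_pass by assumption. now apply sh_cons.
      * rewrite !ins_block by assumption. now apply sh_cons, sh_cons.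
  - destruct s as [a p], t as [b q]; simpl in H.
    destruct (dec (a = u)) as [e|n].
    + subst a. assert (b <> u) by (intro; subst; now apply (Eneq u u)).
      assert (E b u) by now apply Esym.
      fold (lt M u p). rewrite ins_cons_eq, ins_pass by assumption. rewrite ins_cons_eq.
      destruct (dec _). apply sh_refl. apply sh_swap. exact H.
    + destruct (dec (b = u)) as [e|n'].
      * subst b. fold (lt M u q). rewrite ins_pass by assumption.
        rewrite ins_cons_eq, ins_cons_eq.
        destruct (dec _). apply sh_refl. apply sh_swap. exact H.
      * destruct (dec (E a u)) as [ha|ha], (dec (E b u)) as [hb|hb].
        -- rewrite !ins_pass by assumption. now apply sh_swap.
        -- rewrite ins_pass, ins_block, ins_block by assumption.
           eapply sh_trans. apply sh_swap. exact ha.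
           apply sh_cons, sh_swap. exact H.
        -- rewrite ins_block, ins_pass, ins_block by assumption.
           eapply sh_trans. 2: { apply sh_sym, sh_swap. exact hb. }
           apply sh_cons, sh_swap. exact H.
        -- rewrite !ins_block by assumption. apply sh_cons, sh_swap. exact H.
Qed.

Lemma act_sh u y x x' : sh E M x x' -> sh E M (act E M u y x) (act E M u y x').
Proof. intros h; unfold act; destruct (dec _); [exact h| now apply ins_sh]. Qed.

Lemma noacc_ins w u y x : noacc E M w x -> E w u -> noacc E M w (ins E M u y x).
Proof.
  intros h hwu. assert (hs : E u w) by now apply Esym.
  assert (hn : u <> w) by now apply Eneq.
  induction x as [|[a z] x IH].
  - simpl. auto.
  - simpl in h. destruct h as [h1 h2].
    destruct (dec (a = u)) as [e|n].
    + subst a. fold (lt M u z). rewrite ins_cons_eq. destruct (dec _).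
      * auto.
      * simpl. auto.
    + destruct (dec (E a u)) as [ha|ha].
      * rewrite ins_pass by assumption. simpl. auto.
      * rewrite ins_block by assumption. simpl. split; auto.
Qed.

Lemma red_ins u y x : y <> mone (M u) -> red E M x -> red E M (ins E M u y x).
Proof.
  intros hy. induction x as [|[a z] x IH]; intros hr.
  - simpl. auto.
  - simpl in hr. destruct hr as (h1 & h2 & h3).
    destruct (dec (a = u)) as [e|n].
    + subst a. fold (lt M u z). rewrite ins_cons_eq. destruct (dec _) as [e|e].
      * exact h3.
      * simpl. auto.
    + destruct (dec (E a u)) as [ha|ha].
      * rewrite ins_pass by assumption. simpl. split; [exact h1|split].
        -- now apply noacc_ins.
        -- auto.
      * rewrite ins_block by assumption. simpl. split; [exact hy|split].
        -- split; [exact n| intro; contradiction].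
        -- auto.
Qed.

Lemma red_act u y x : red E M x -> red E M (act E M u y x).
Proof. intros h; unfold act; destruct (dec _); [exact h| now apply red_ins]. Qed.

Lemma noacc_ins_sh u y x : noacc E M u x -> sh E M (ins E M u y x) (lt M u y :: x).
Proof.
  induction x as [|[a z] x IH]; intros h.
  - apply sh_refl.
  - simpl in h. destruct h as [h1 h2].
    destruct (dec (E a u)) as [ha|ha].
    + rewrite ins_pass by assumption.
      eapply sh_trans. apply sh_cons, IH, h2, ha.
      apply sh_swap. exact ha.
    + rewrite ins_block by assumption. apply sh_refl.
Qed.

Lemma act_pass u y w z x : w <> u -> E w u ->
  act E M u y (@cons (letter M) (existT _ w z) x) = @cons (letter M) (existT _ w z) (act E M u y x).
Proof. intros; unfold act; destruct (dec _); [reflexivity| now apply ins_pass]. Qed.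

Lemma ins_mul u y y' x : red E M x -> y <> mone (M u) -> y' <> mone (M u) ->
  sh E M (ins E M u y' (ins E M u y x)) (act E M u (mop (M u) y y') x).
Proof.
  intros hr hy hy'. induction x as [|[w z] x IH].
  - simpl ins at 2. rewrite ins_cons_eq. unfold act.
    destruct (dec _); apply sh_refl.
  - simpl in hr. destruct hr as (h1 & h2 & h3).
    destruct (dec (w = u)) as [e|n].
    + subst w. simpl in h1, h2. fold (lt M u z). rewrite ins_cons_eq.
      destruct (dec (mop (M u) z y = mone (M u))) as [e1|e1].
      * unfold act. destruct (dec (mop (M u) y y' = mone (M u))) as [e2|e2].
        -- assert (z = y').
           { rewrite <- (mop1r _ z), <- e2, mopA, e1, mop1l. reflexivity. }
           subst. now apply noacc_ins_sh.
        -- rewrite ins_cons_eq, mopA, e1, mop1l.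
           destruct (dec _); [contradiction|]. now apply noacc_ins_sh.
      * rewrite ins_cons_eq. unfold act.
        destruct (dec (mop (M u) y y' = mone (M u))) as [e2|e2].
        -- rewrite <- mopA, e2, mop1r. destruct (dec _); [contradiction|]. apply sh_refl.
        -- rewrite ins_cons_eq, mopA. apply sh_refl.
    + destruct (dec (E w u)) as [ha|ha].
      * rewrite ins_pass, ins_pass, act_pass by assumption. apply sh_cons, IH, h3.
      * rewrite ins_block by assumption. rewrite ins_cons_eq. unfold act.
        destruct (dec _). apply sh_refl. rewrite ins_block by assumption. apply sh_refl.
Qed.

Lemma act_mul u y y' x : red E M x ->
  sh E M (act E M u y' (act E M u y x)) (act E M u (mop (M u) y y') x).
Proof.
  intros hr. unfold act at 2.
  destruct (dec (y = mone (M u))) as [e|e].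
  - subst. rewrite mop1l. apply sh_refl.
  - unfold act at 1. destruct (dec (y' = mone (M u))) as [e'|e'].
    + subst. rewrite mop1r. unfold act. destruct (dec _); [contradiction|apply sh_refl].
    + now apply ins_mul.
Qed.

Lemma ins_comm u t y y' x : E u t ->
  sh E M (ins E M t y' (ins E M u y x)) (ins E M u y (ins E M t y' x)).
Proof.
  intros hut. assert (htu : E t u) by now apply Esym.
  assert (nut : u <> t) by now apply Eneq. assert (ntu : t <> u) by now apply Eneq.
  induction x as [|[w z] x IH].
  - simpl ins at 2 4. unfold lt. rewrite ins_pass, ins_pass by assumption.
    simpl. apply sh_swap. exact hut.
  - destruct (dec (w = u)) as [e|n].
    + subst w. fold (lt M u z). rewrite ins_cons_eq. unfold lt at 2.
      rewrite ins_pass by assumption. fold (lt M u z). rewrite ins_cons_eq.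
      destruct (dec _). apply sh_refl. unfold lt. rewrite ins_pass by assumption. apply sh_refl.
    + destruct (dec (w = t)) as [e|n'].
      * subst w. rewrite (ins_pass u y t z x ntu htu).
        fold (lt M t z). rewrite !ins_cons_eq.
        destruct (dec _). apply sh_refl. unfold lt. rewrite ins_pass by assumption. apply sh_refl.
      * destruct (dec (E w u)) as [ha|ha], (dec (E w t)) as [hb|hb].
        -- rewrite (ins_pass u y w z x), (ins_pass t y' w z x), (ins_pass t y' w z (ins E M u y x)),
             (ins_pass u y w z (ins E M t y' x)) by assumption. now apply sh_cons.
        -- rewrite (ins_pass u y w z x), (ins_block t y' w z (ins E M u y x)), (ins_block t y' w z x)
             by assumption. unfold lt.
           rewrite (ins_pass u y t y' (@cons (letter M) (existT _ w z) x)) by assumption.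
           rewrite (ins_pass u y w z x) by assumption. apply sh_refl.
        -- rewrite (ins_block u y w z x), (ins_pass t y' w z x) by assumption. unfold lt.
           rewrite (ins_pass t y' u y (@cons (letter M) (existT _ w z) x)) by assumption.
           rewrite (ins_pass t y' w z x) by assumption.
           rewrite (ins_block u y w z (ins E M t y' x)) by assumption. apply sh_refl.
        -- rewrite (ins_block u y w z x), (ins_block t y' w z x) by assumption. unfold lt.
           rewrite (ins_pass t y' u y (@cons (letter M) (existT _ w z) x)) by assumption.
           rewrite (ins_pass u y t y' (@cons (letter M) (existT _ w z) x)) by assumption.
           rewrite (ins_block t y' w z x), (ins_block u y w z x) by assumption.
           apply sh_swap. exact hut.
Qed.

Lemma act_comm u t y y' x : E u t ->
  sh E M (act E M t y' (act E M u y x)) (act E M u y (act E M t y' x)).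
Proof.
  intros h. unfold act. destruct (dec (y = _)), (dec (y' = _)); try apply sh_refl.
  now apply ins_comm.
Qed.


Definition step (x : word M) (l : letter M) : word M := act E M (projT1 l) (projT2 l) x.
Definition F (x : word M) (w : word M) : word M := fold_left step w x.

Lemma F_sh w : forall x x', sh E M x x' -> sh E M (F x w) (F x' w).
Proof.
  induction w as [|l w IH]; intros x x' h; simpl. exact h.
  apply IH. unfold step. now apply act_sh.
Qed.

Lemma F_red w : forall x, red E M x -> red E M (F x w).
Proof.
  induction w as [|l w IH]; intros x h; simpl. exact h.
  apply IH. unfold step. now apply red_act.
Qed.

Lemma F_app x w1 w2 : F x (w1 ++ w2) = F (F x w1) w2.
Proof. unfold F. apply fold_left_app. Qed.

Lemma gp_F (w1 w2 : word M) : gp_equiv E w1 w2 -> forall x, red E M x -> sh E M (F x w1) (F x w2).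
Proof.
  induction 1; intros x hx.
  - apply sh_refl.
  - apply sh_sym; auto.
  - eapply sh_trans; eauto.
  - rewrite !F_app. eapply sh_trans. apply F_sh, IHgp_equiv1, hx.
    apply IHgp_equiv2. now apply F_red.
  - simpl. unfold step, act; simpl. destruct (dec _); [apply sh_refl|congruence].
  - simpl. unfold step; simpl. now apply act_mul.
  - simpl. unfold step; simpl. now apply act_comm.
Qed.

Lemma gp_app_l (a w1 w2 : word M) : gp_equiv E w1 w2 -> gp_equiv E (a ++ w1) (a ++ w2).
Proof. intros; apply gp_cat; [apply gp_refl|assumption]. Qed.

Lemma rev_ins u y x : gp_equiv E (rev (ins E M u y x)) (rev x ++ [lt M u y]).
Proof.
  induction x as [|[w z] x IH].
  - apply gp_refl.
  - destruct (dec (w = u)) as [e|n].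
    + subst w. fold (lt M u z). rewrite ins_cons_eq. simpl. rewrite <- app_assoc. simpl.
      destruct (dec _) as [e|e].
      * eapply gp_trans. 2: { apply gp_app_l, gp_sym, gp_mul. }
        rewrite e. eapply gp_trans. 2: { apply gp_app_l, gp_sym, gp_unit. }
        rewrite app_nil_r. apply gp_refl.
      * simpl. apply gp_app_l, gp_sym, gp_mul.
    + destruct (dec (E w u)) as [ha|ha].
      * rewrite ins_pass by assumption. simpl.
        eapply gp_trans. apply gp_cat. exact IH. apply gp_refl.
        rewrite <- !app_assoc. apply gp_app_l. simpl. apply gp_comm. now apply Esym.
      * rewrite ins_block by assumption. simpl. rewrite <- app_assoc. apply gp_refl.
Qed.

Lemma rev_F w : forall x, gp_equiv E (rev (F x w)) (rev x ++ w).
Proof.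
  induction w as [|l w IH]; intros x.
  - simpl. rewrite app_nil_r. apply gp_refl.
  - change (F x (l :: w)) with (F (step x l) w).
    eapply gp_trans. apply IH. change (l :: w) with ([l] ++ w). rewrite app_assoc.
    unfold step. destruct l as [u y]; simpl. fold (lt M u y).
    apply gp_cat; [|apply gp_refl]. unfold act. destruct (dec _) as [e|e].
    + subst. eapply gp_trans. 2: { apply gp_app_l, gp_sym, gp_unit. }
      rewrite app_nil_r. apply gp_refl.
    + apply rev_ins.
Qed.

Definition allv (v : V) (x : word M) := Forall (fun s => projT1 s = v) x.

Lemma sh_inv v x y : sh E M x y -> length x = length y /\ (allv v x <-> allv v y).
Proof.
  unfold allv. induction 1; simpl.
  - tauto.
  - destruct IHsh; split; [congruence|tauto].
  - destruct IHsh1, IHsh2; split; [congruence|tauto].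
  - destruct IHsh; split; [congruence|].
    split; intros h; inversion h; subst; constructor; tauto.
  - split; [reflexivity|].
    split; intros h; inversion h as [|? ? h1 h2]; inversion h2; subst; repeat constructor; assumption.
Qed.

Lemma key v c x : red E M x -> length (act E M v c x) <= 1 -> allv v (act E M v c x) ->
  length x <= 1 /\ allv v x.
Proof.
  unfold act. destruct (dec _) as [e|hc]; [auto|].
  intros hr. destruct x as [|[w z] x]; [simpl; intros; split; [auto|constructor]|].
  simpl in hr. destruct hr as (h1 & h2 & h3).
  destruct (dec (w = v)) as [e|n].
  - subst w. fold (lt M v z). rewrite ins_cons_eq. destruct (dec _) as [e|e].
    + intros hl ha. destruct x as [|s x]. split; [simpl; auto|repeat constructor].
      destruct x; [|simpl in hl; lia].
      inversion ha; subst. simpl in h2. destruct h2. contradiction.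
    + intros hl ha. destruct x as [|s x]; [|simpl in hl; lia].
      split; [auto|repeat constructor].
  - destruct (dec (E w v)) as [ha|ha].
    + rewrite ins_pass by assumption. intros _ hv. inversion hv; subst. contradiction.
    + rewrite ins_block by assumption. intros hl. simpl in hl. lia.
Qed.

Lemma right_unitary v c a :
  in_vertex E v (a ++ [lt M v c]) -> in_vertex E v a.
Proof.
  intros [m hm].
  assert (hs := gp_F _ _ hm [] I). rewrite F_app in hs. simpl in hs.
  unfold step in hs; simpl in hs.
  set (x := F [] a) in *.
  assert (hr : red E M x) by (apply F_red; exact I).
  destruct (sh_inv v _ _ hs) as [hl ha].
  assert (hk : length (act E M v c x) <= 1 /\ allv v (act E M v c x)).
  { rewrite hl. split.
    - unfold act. destruct (dec _); simpl; auto.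
    - apply ha. unfold act. destruct (dec _); repeat constructor. }
  destruct (key v c x hr (proj1 hk) (proj2 hk)) as [hl' ha'].
  assert (hrev : gp_equiv E a (rev x)).
  { apply gp_sym. eapply gp_trans. apply rev_F. apply gp_refl. }
  destruct x as [|[w z] x'].
  - exists (mone (M v)). eapply gp_trans. exact hrev. apply gp_sym, gp_unit.
  - destruct x'; [|simpl in hl'; lia].
    inversion ha'; subst. simpl in *. exists z. exact hrev.
Qed.

End S.

Definition opM (N : monoid) : monoid.
Proof.
  refine (@Monoid (mcarrier N) (fun x y => mop N y x) (mone N) _ _ _).
  - intros; symmetry; apply mopA.
  - intros; apply mop1r.
  - intros; apply mop1l.
Defined.

Lemma gp_rev1 V (E : V -> V -> Prop) (M : V -> monoid) (HE : simple_graph E) (w1 w2 : word M) :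
  gp_equiv E w1 w2 ->
  @gp_equiv V E (fun v => opM (M v)) (@rev (letter (fun v => opM (M v))) w1)
    (@rev (letter (fun v => opM (M v))) w2).
Proof.
  induction 1; simpl.
  - apply gp_refl.
  - now apply gp_sym.
  - eapply gp_trans; eauto.
  - change (@gp_equiv V E (fun v => opM (M v))
      (@rev (letter (fun v => opM (M v))) (@app (letter (fun v => opM (M v))) w1 w2))
      (@rev (letter (fun v => opM (M v))) (@app (letter (fun v => opM (M v))) w1' w2'))).
    rewrite !rev_app_distr. apply gp_cat; assumption.
  - pose proof (gp_unit E (fun v => opM (M v)) v) as hh; unfold lt in *; simpl in *; exact hh.
  - pose proof (gp_mul E (fun v => opM (M v)) v n m) as hh; unfold lt in *; simpl in *; exact hh.
  - pose proof (gp_comm E (fun v => opM (M v)) v u n m (proj1 HE _ _ H)) as hh; unfold lt in *; simpl in *; exact hh.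
Qed.

Lemma gp_rev2 V (E : V -> V -> Prop) (M : V -> monoid) (HE : simple_graph E) (w1 w2 : word M) :
  @gp_equiv V E (fun v => opM (M v)) w1 w2 -> gp_equiv E (@rev (letter M) w1) (@rev (letter M) w2).
Proof.
  induction 1; simpl.
  - apply gp_refl.
  - now apply gp_sym.
  - eapply gp_trans; eauto.
  - change (@gp_equiv V E M
      (@rev (letter M) (@app (letter M) w1 w2))
      (@rev (letter M) (@app (letter M) w1' w2'))).
    rewrite !rev_app_distr. apply gp_cat; assumption.
  - pose proof (gp_unit E M v) as hh; unfold lt in *; simpl in *; exact hh.
  - pose proof (gp_mul E M v n m) as hh; unfold lt in *; simpl in *; exact hh.
  - pose proof (gp_comm E M v u n m (proj1 HE _ _ H)) as hh; unfold lt in *; simpl in *; exact hh.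
Qed.

Theorem corollary1p2 (V : Type) (E : V -> V -> Prop) (M : V -> monoid)
  (HE : simple_graph E) (v : V) (c : M v) (a : word M) :
  (in_vertex E v (a ++ [lt M v c]) -> in_vertex E v a) /\
  (in_vertex E v ([lt M v c] ++ a) -> in_vertex E v a).
Proof.
  split.
  - apply right_unitary; exact HE.
  - intros [m hm].
    apply (gp_rev1 V E M HE) in hm. rewrite rev_app_distr in hm. simpl in hm.
    assert (h : @in_vertex V E (fun v => opM (M v)) v (rev a ++ [lt (fun v => opM (M v)) v c]))
      by (exists m; exact hm).
    apply (right_unitary V E (fun v => opM (M v)) HE) in h.
    destruct h as [m' hm']. exists m'.
    apply (gp_rev2 V E M HE) in hm'. rewrite rev_involutive in hm'. exact hm'.
Qed.
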